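(* Let $d\in\{1,2,3\}$ and let $K\subset M^{m\times n}$ be a $d$-dimensional subspace without Rank-$1$ connections, with $K=P_K(\mathbb{R}^d)$ where $P_K(z)=(a_{ij}\cdot z)_{1\le i\le m,1\le j\le n}$, $a_{ij}\in\mathbb{R}^d$, is a linear isomorphism onto $K$. If $\dim\mathrm{Span}\{a_{i_0l}:l=1,\dots,n\}=1$ for some $i_0$, or $\dim\mathrm{Span}\{a_{lj_0}:l=1,\dots,m\}=1$ for some $j_0$, then there exists $\beta\in\mathbb{R}^{q_0}\setminus\{0\}$ with $\sum_{k=1}^{q_0}\beta_kM_k(X)\ge0$ for all $X\in K$ and $\sum_k\beta_kM_k\not\equiv0$ on $K$, where $M_1,\dots,M_{q_0}$ are all the $2\times2$ minors of $m\times n$ matrices.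
   Context: A set has Rank-$1$ connections if it contains $A\ne B$ with $\mathrm{Rank}(A-B)=1$. *)

(* Defs.v *)
From HB Require Import structures.
From mathcomp Require Import all_boot all_order all_algebra.
From mathcomp Require Import reals.
Set Implicit Arguments. Unset Strict Implicit. Unset Printing Implicit Defensive.
Import Order.TTheory GRing.Theory Num.Theory.
Local Open Scope ring_scope.

Definition PK (R : realType) (m n d : nat) (a : 'I_m -> 'I_n -> 'rV[R]_d)
  (z : 'rV[R]_d) : 'M[R]_(m, n) :=
  \matrix_(i < m, j < n) \sum_(k < d) a i j 0 k * z 0 k.

Definition minor_idx (m n : nat) : pred (('I_m * 'I_m) * ('I_n * 'I_n)) :=
  fun k => ((k.1.1 < k.1.2)%N && (k.2.1 < k.2.2)%N).

Definition minor2 (R : realType) (m n : nat) (X : 'M[R]_(m, n))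
  (k : ('I_m * 'I_m) * ('I_n * 'I_n)) : R :=
  X k.1.1 k.2.1 * X k.1.2 k.2.2 - X k.1.1 k.2.2 * X k.1.2 k.2.1.

Definition minor_comb (R : realType) (m n : nat)
  (beta : ('I_m * 'I_m) * ('I_n * 'I_n) -> R) (X : 'M[R]_(m, n)) : R :=
  \sum_(k | minor_idx k) beta k * minor2 X k.

(* Main.v *)
Require Import Defs.
From HB Require Import structures.
From mathcomp Require Import all_boot all_order all_algebra.
From mathcomp Require Import reals.
From mathcomp Require Import ring.
Import Order.TTheory GRing.Theory Num.Theory.
Set Implicit Arguments. Unset Strict Implicit. Unset Printing Implicit Defensive.
Local Open Scope ring_scope.

Definition dot (R : realType) (d : nat) (u z : 'rV[R]_d) : R :=
  \sum_(k < d) u 0 k * z 0 k.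

Lemma dotDl (R : realType) d (u w z : 'rV[R]_d) : dot (u + w) z = dot u z + dot w z.
Proof. by rewrite /dot -big_split; apply eq_bigr => k _; rewrite mxE mulrDl. Qed.
Lemma dotZl (R : realType) d c (u z : 'rV[R]_d) : dot (c *: u) z = c * dot u z.
Proof. by rewrite /dot mulr_sumr; apply eq_bigr => k _; rewrite mxE mulrA. Qed.
Lemma dotNl (R : realType) d (u z : 'rV[R]_d) : dot (- u) z = - dot u z.
Proof. by rewrite -scaleN1r dotZl mulN1r. Qed.
Lemma dotBl (R : realType) d (u w z : 'rV[R]_d) : dot (u - w) z = dot u z - dot w z.
Proof. by rewrite dotDl dotNl. Qed.
Lemma dot0l (R : realType) d (z : 'rV[R]_d) : dot 0 z = 0.
Proof. by rewrite /dot big1 // => k _; rewrite mxE mul0r. Qed.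
Lemma dot_suml (R : realType) d (T : finType) (F : T -> 'rV[R]_d) z :
  dot (\sum_t F t) z = \sum_t dot (F t) z.
Proof. exact: (big_morph (fun u => dot u z) (fun u w => dotDl u w z) (dot0l z)). Qed.
Lemma PKE (R : realType) m n d (a : 'I_m -> 'I_n -> 'rV[R]_d) z i j :
  PK a z i j = dot (a i j) z.
Proof. by rewrite /PK mxE. Qed.
Lemma dot_self (R : realType) d (v : 'rV[R]_d) : v != 0 -> dot v v != 0.
Proof.
move=> nz; apply/negP => /eqP H; move/negP: nz; apply; apply/eqP/rowP => k.
rewrite /dot in H.
have := psumr_eq0P _ H.
move=> /(_ (fun i _ => ltac:(rewrite -expr2; exact: sqr_ge0))) /(_ k isT).
by move/eqP; rewrite mulf_eq0 orbb mxE => /eqP.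
Qed.

Lemma row_case (R : realType) (m n d : nat) (a : 'I_m -> 'I_n -> 'rV[R]_d) (i0 : 'I_m) :
  (forall z, PK a z != 0 -> \rank (PK a z) != 1%N) ->
  \rank (\matrix_(l < n) a i0 l) = 1%N ->
  exists beta : ('I_m * 'I_m) * ('I_n * 'I_n) -> R,
    (forall k, ~~ minor_idx k -> beta k = 0) /\
    (exists k, minor_idx k /\ beta k != 0) /\
    (forall z : 'rV[R]_d, 0 <= minor_comb beta (PK a z)) /\
    (exists z : 'rV[R]_d, minor_comb beta (PK a z) != 0).
Proof.
move=> Hnr Hrk.
pose A : 'M[R]_(n, d) := \matrix_(l < n) a i0 l.
have {}Hrk : \rank A = 1%N := Hrk.
have rowA : forall l, row l A = a i0 l by move=> l; rewrite rowK.
have [l Hl] : exists l, a i0 l != 0.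
  case: (pickP (fun l => a i0 l != 0)) => [l Hl|H]; first by exists l.
  have A0 : A = 0.
    apply/row_matrixP => k; rewrite row0 rowA; apply/eqP.
    by move: (H k) => /negbFE.
  by rewrite A0 mxrank0 in Hrk.
set v := a i0 l.
have ev : v = a i0 l by [].
clearbody v. rewrite -ev in Hl.
have vA : (v <= A)%MS by rewrite ev -rowA row_sub.
have Av : (A <= v)%MS.
  have := mxrank_leqif_sup vA. rewrite rank_rV Hl Hrk => H; apply/(leqif_refl 1); exact: H.
have [D HD] := submxP Av.
pose c := fun j => D j 0.
have Ha0 : forall j z, dot (a i0 j) z = c j * dot v z.
  move=> j z; rewrite /dot mulr_sumr; apply eq_bigr => k _.
  have -> : a i0 j 0 k = A j k by rewrite /A mxE.
  rewrite HD mxE big_ord1 /c mulrA.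
  by have -> : (ord0 : 'I_1) = 0 by apply: val_inj.
pose g := fun i j1 j2 => c j1 *: a i j2 - c j2 *: a i j1.
have F1 : forall z i j1 j2, PK a z i0 j1 * PK a z i j2 - PK a z i0 j2 * PK a z i j1
     = dot v z * dot (g i j1 j2) z.
  by move=> z i j1 j2; rewrite !PKE !Ha0 /g dotBl !dotZl; ring.
pose T := (('I_m * 'I_m) * ('I_n * 'I_n))%type.
pose cond := fun t : T => minor_idx t && ((t.1.1 == i0) || (t.1.2 == i0)).
pose W0 := fun t : T => if t.1.1 == i0 then g t.1.2 t.2.1 t.2.2 else - g t.1.1 t.2.1 t.2.2.
pose Wt := fun t : T => if cond t then W0 t else 0.
have F2 : forall t z, cond t -> minor2 (PK a z) t = dot v z * dot (W0 t) z.
  move=> [[i1 i2] [j1 j2]] z /andP[_ /=] /orP[/eqP e|/eqP e]; rewrite /minor2 /W0 /=.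
  - by rewrite e eqxx -F1.
  - case: eqP => [e1|_]; first by rewrite e1 -F1.
    by rewrite dotNl mulrN -F1 e; ring.
pose Wm : 'M[R]_(#|{:T}|, d) := \matrix_(r < #|{:T}|) Wt (enum_val r).
have rowWm : forall t, row (enum_rank t) Wm = Wt t by move=> t; rewrite rowK enum_rankK.
case: (boolP (v <= Wm)%MS) => [sub|nsub].
  have [u Hu] := submxP sub.
  pose beta := fun t : T => if cond t then u 0 (enum_rank t) else 0.
  have Hv : v = \sum_t u 0 (enum_rank t) *: Wt t.
    rewrite Hu mulmx_sum_row (reindex (@enum_rank T)) /=; last exact: onW_bij (enum_rank_bij T).
    by apply eq_bigr => t _; rewrite rowWm.
  have Hmc : forall z, minor_comb beta (PK a z) = dot v z ^+ 2.
    move=> z; rewrite /minor_comb expr2 {2}Hv dot_suml mulr_sumr big_mkcond /=.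
    apply eq_bigr => t _; rewrite dotZl /beta /Wt.
    case Ht: (cond t).
    - by move: (Ht) => /andP[-> _]; rewrite F2 //; ring.
    - by rewrite dot0l !mulr0 mul0r; case: ifP.
  exists beta; split; [|split; [|split]].
  + by move=> k /negbTE Hk; rewrite /beta /cond Hk.
  + case: (pickP (fun k => minor_idx k && (beta k != 0))) => [k /andP[H1 H2]|H]; first by exists k.
    exfalso; have := Hmc v; rewrite /minor_comb big1 => [/esym/eqP|k Hk].
      by rewrite sqrf_eq0 (negbTE (dot_self Hl)).
    by have := H k; rewrite Hk /= => /negbFE/eqP ->; rewrite mul0r.
  + by move=> z; rewrite Hmc sqr_ge0.
  + by exists v; rewrite Hmc sqrf_eq0 dot_self.
exfalso.
rewrite submxE in nsub.
pose C := cokermx Wm.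
have [k Hk] : exists k, (v *m C) 0 k != 0.
  case: (pickP (fun k => (v *m C) 0 k != 0)) => [k Hk|H]; first by exists k.
  exfalso; move/negP: nsub; apply; apply/eqP/rowP => k; rewrite [RHS]mxE.
  by apply/eqP; move: (H k) => /negbFE.
pose z : 'rV[R]_d := \row_j C j k.
have dotz : forall w, dot w z = (w *m C) 0 k.
  by move=> w; rewrite /dot mxE; apply eq_bigr => j _; rewrite mxE.
have HW : forall t, dot (Wt t) z = 0.
  by move=> t; rewrite dotz -rowWm -row_mul mulmx_coker row0 mxE.
have Hv0 : dot v z != 0 by rewrite dotz.
have Hg : forall i j1 j2, dot (g i j1 j2) z = 0.
  have Hi0 : forall j1 j2, dot (g i0 j1 j2) z = 0.
    by move=> j1 j2; rewrite /g dotBl !dotZl !Ha0; ring.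
  have Ha : forall i j1 j2, dot (g i j2 j1) z = - dot (g i j1 j2) z.
    by move=> i j1 j2; rewrite /g !dotBl !dotZl; ring.
  have key : forall i (j1 j2 : 'I_n), (j1 < j2)%N -> dot (g i j1 j2) z = 0.
    move=> i j1 j2 lt12; case: (ltngtP i0 i) => [lt|lt|eq].
    * have := HW ((i0,i),(j1,j2)).
      by rewrite /Wt /cond /minor_idx /= lt lt12 eqxx /= /W0 /= eqxx.
    * have ne : (i == i0) = false by apply/negbTE; rewrite -val_eqE /= neq_ltn lt.
      have := HW ((i,i0),(j1,j2)).
      rewrite /Wt /cond /minor_idx /= lt lt12 eqxx orbT /W0 /= ne.
      by move/eqP; rewrite dotNl oppr_eq0 => /eqP.
    * by have -> : i = i0 by apply: val_inj.
  move=> i j1 j2; case: (ltngtP j1 j2) => [lt|lt|eq].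
  - exact: key.
  - by rewrite Ha key // oppr0.
  - have -> : j2 = j1 by apply: val_inj; first [exact: eq | exact: (esym eq)].
    by rewrite /g subrr dot0l.
pose X := PK a z.
have Hx : forall i j1 j2, X i0 j1 * X i j2 = X i0 j2 * X i j1.
  by move=> i j1 j2; apply/eqP; rewrite -subr_eq0 /X F1 Hg mulr0.
have Xl : X i0 l = dot v z by rewrite /X PKE ev.
have nz : X i0 l != 0 by rewrite Xl.
have eX : X = PK a z by [].
clearbody X.
have XE : X = (\col_i (X i l / X i0 l)) *m (\row_j X i0 j).
  apply/matrixP => i j; rewrite [RHS]mxE big_ord1 !mxE.
  apply: (mulfI nz); rewrite Hx; field; exact: nz.
have : \rank X == 1%N.
  rewrite eqn_leq lt0n mxrank_eq0 andbC; apply/andP; split.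
    by apply/eqP => X0; move: nz; rewrite X0 mxE eqxx.
  by rewrite XE; apply: leq_trans (mxrankM_maxl _ _) (rank_leq_col _).
apply/negP; rewrite eX; apply: Hnr; rewrite -eX.
by apply/eqP => X0; move: nz; rewrite X0 mxE eqxx.
Qed.

Lemma PK0 (R : realType) m n d (a : 'I_m -> 'I_n -> 'rV[R]_d) : PK a 0 = 0.
Proof. by apply/matrixP => i j; rewrite !mxE big1 // => k _; rewrite mxE mulr0. Qed.

Theorem lemma4 (R : realType) (m n d : nat) (a : 'I_m -> 'I_n -> 'rV[R]_d) :
  (1 <= d <= 3)%N ->
  injective (PK a) ->
  (forall z1 z2 : 'rV[R]_d, PK a z1 != PK a z2 ->
     \rank (PK a z1 - PK a z2) != 1%N) ->
  ((exists i0 : 'I_m, \rank (\matrix_(l < n) a i0 l) = 1%N) \/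
   (exists j0 : 'I_n, \rank (\matrix_(l < m) a l j0) = 1%N)) ->
  exists beta : ('I_m * 'I_m) * ('I_n * 'I_n) -> R,
    (forall k, ~~ minor_idx k -> beta k = 0) /\
    (exists k, minor_idx k /\ beta k != 0) /\
    (forall z : 'rV[R]_d, 0 <= minor_comb beta (PK a z)) /\
    (exists z : 'rV[R]_d, minor_comb beta (PK a z) != 0).
Proof.
move=> _ _ Hnr [[i0 Hi0]|[j0 Hj0]].
  have Hnr' : forall z, PK a z != 0 -> \rank (PK a z) != 1%N.
    by move=> z nz; have := Hnr z 0; rewrite PK0 subr0; apply.
  exact: row_case Hnr' Hi0.
pose a' := fun (j : 'I_n) (i : 'I_m) => a i j.
have PKt : forall z, PK a' z = (PK a z)^T by move=> z; apply/matrixP => j i; rewrite !mxE.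
have Hnr' : forall z, PK a' z != 0 -> \rank (PK a' z) != 1%N.
  move=> z; rewrite PKt trmx_eq0 mxrank_tr => nz.
  by have := Hnr z 0; rewrite PK0 subr0; apply.
have [b [H1 [H2 [H3 H4]]]] := row_case Hnr' Hj0.
pose sw := fun k : ('I_m * 'I_m) * ('I_n * 'I_n) => (k.2, k.1).
have Hmi : forall k, minor_idx (sw k) = minor_idx k by move=> k; rewrite /minor_idx andbC.
have Hmc : forall z, minor_comb (fun k => b (sw k)) (PK a z) = minor_comb b (PK a' z).
  move=> z; rewrite /minor_comb [RHS](reindex sw) /=; last first.
    by apply: onW_bij; exists (fun k => (k.2, k.1)); case.
  apply: eq_big => [k|k _]; first by rewrite Hmi.
  by rewrite PKt /minor2 !mxE /=; ring.
exists (fun k => b (sw k)); split; [|split; [|split]].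
- by move=> k Hk; apply: H1; rewrite Hmi.
- by case: H2 => k [Hk1 Hk2]; exists (k.2, k.1); rewrite -Hmi; case: k Hk1 Hk2 => [[? ?] [? ?]].
- by move=> z; rewrite Hmc.
- by case: H4 => z Hz; exists z; rewrite Hmc.
Qed.
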